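(* Let $\mathcal{C}$ be a deflation-exact category and let $\mathcal{A}$ be a non-empty full subcategory of $\mathcal{C}$ satisfying axiom (A3). Let $g\colon Y\to Z$ be a morphism which has a kernel belonging to $\mathcal{A}$, and suppose there exists a deflation $f\colon X\twoheadrightarrow Y$ such that $gf$ is also a deflation. Then $g$ is a deflation.
   Context: A conflation category is an additive category with a class of kernel-cokernel pairs (closed under isomorphisms) called conflations; first map an inflation, second a deflation. A deflation-exact category is a conflation category satisfying: (R0) $1_0$ is a deflation; (R1) composites of deflations are deflations; (R2) pullbacks of deflations along arbitrary morphisms exist and are deflations. Axiom (A3) for a full subcategory $\mathcal{A}$: if $a\colon C\rightarrowtail D$ is an inflation and $b\colon C\twoheadrightarrow A$ is a deflation with $A\in\mathcal{A}$, then the pushout of $a$ along $b$ exists and in the pushout square the map $D\to P$ is a deflation and $A\to P$ is an inflation. *)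

(* Defs.v *)
From HB Require Import structures.
From mathcomp Require Import all_boot all_algebra.
Set Implicit Arguments.
Unset Strict Implicit.
Unset Printing Implicit Defensive.
Import GRing.Theory.
Local Open Scope ring_scope.

Record AddCat := {
  Obj :> Type;
  Mor : Obj -> Obj -> zmodType;
  mcomp : forall X Y Z : Obj, Mor Y Z -> Mor X Y -> Mor X Z;
  idm : forall X : Obj, Mor X X;
  comp_assoc : forall (W X Y Z : Obj) (h : Mor Y Z) (g : Mor X Y) (f : Mor W X),
      mcomp h (mcomp g f) = mcomp (mcomp h g) f;
  comp_id_l : forall (X Y : Obj) (f : Mor X Y), mcomp (idm Y) f = f;
  comp_id_r : forall (X Y : Obj) (f : Mor X Y), mcomp f (idm X) = f;
  comp_addl : forall (X Y Z : Obj) (g1 g2 : Mor Y Z) (f : Mor X Y),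
      mcomp (g1 + g2) f = mcomp g1 f + mcomp g2 f;
  comp_addr : forall (X Y Z : Obj) (g : Mor Y Z) (f1 f2 : Mor X Y),
      mcomp g (f1 + f2) = mcomp g f1 + mcomp g f2;
  zobj : Obj;
  zobj_initial : forall (X : Obj) (f : Mor zobj X), f = 0;
  zobj_terminal : forall (X : Obj) (f : Mor X zobj), f = 0;
  biproducts : forall X Y : Obj, exists (B : Obj) (i1 : Mor X B) (i2 : Mor Y B)
      (p1 : Mor B X) (p2 : Mor B Y),
      [/\ mcomp p1 i1 = idm X, mcomp p2 i2 = idm Y, mcomp p1 i2 = 0,
          mcomp p2 i1 = 0 & mcomp i1 p1 + mcomp i2 p2 = idm B]
}.

Arguments mcomp {c X Y Z} g f : rename.
Arguments idm {c} X : rename.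
Arguments zobj {c} : rename.

Section Defs.
Variable C : AddCat.

Definition is_iso (X Y : C) (f : Mor X Y) : Prop :=
  exists g : Mor Y X, mcomp g f = idm X /\ mcomp f g = idm Y.

Definition is_kernel (K Y Z : C) (k : Mor K Y) (g : Mor Y Z) : Prop :=
  mcomp g k = 0 /\
  forall (W : C) (h : Mor W Y), mcomp g h = 0 ->
    exists u : Mor W K, mcomp k u = h /\ forall u' : Mor W K, mcomp k u' = h -> u' = u.

Definition is_cokernel (Y Z Q : C) (c : Mor Z Q) (f : Mor Y Z) : Prop :=
  mcomp c f = 0 /\
  forall (W : C) (h : Mor Z W), mcomp h f = 0 ->
    exists u : Mor Q W, mcomp u c = h /\ forall u' : Mor Q W, mcomp u' c = h -> u' = u.

Definition kernel_cokernel_pair (X Y Z : C) (i : Mor X Y) (p : Mor Y Z) : Prop :=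
  is_kernel i p /\ is_cokernel p i.

Definition is_pullback (A B D P : C) (p : Mor B D) (f : Mor A D)
    (f' : Mor P B) (p' : Mor P A) : Prop :=
  mcomp f p' = mcomp p f' /\
  forall (W : C) (a : Mor W A) (b : Mor W B), mcomp f a = mcomp p b ->
    exists u : Mor W P, (mcomp p' u = a /\ mcomp f' u = b) /\
      forall u' : Mor W P, mcomp p' u' = a -> mcomp f' u' = b -> u' = u.

Definition is_pushout (E D A P : C) (a : Mor E D) (b : Mor E A)
    (a' : Mor D P) (b' : Mor A P) : Prop :=
  mcomp a' a = mcomp b' b /\
  forall (W : C) (x : Mor D W) (y : Mor A W), mcomp x a = mcomp y b ->
    exists u : Mor P W, (mcomp u a' = x /\ mcomp u b' = y) /\
      forall u' : Mor P W, mcomp u' a' = x -> mcomp u' b' = y -> u' = u.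

End Defs.

Definition ConflClass (C : AddCat) :=
  forall X Y Z : C, Mor X Y -> Mor Y Z -> Prop.

Definition is_conflation_category (C : AddCat) (E : ConflClass C) : Prop :=
  (forall (X Y Z : C) (i : Mor X Y) (p : Mor Y Z), E X Y Z i p ->
      kernel_cokernel_pair i p) /\
  (forall (X Y Z X' Y' Z' : C) (i : Mor X Y) (p : Mor Y Z)
          (i' : Mor X' Y') (p' : Mor Y' Z')
          (a : Mor X' X) (b : Mor Y' Y) (c : Mor Z' Z),
      E X Y Z i p -> is_iso a -> is_iso b -> is_iso c ->
      mcomp b i' = mcomp i a -> mcomp c p' = mcomp p b ->
      E X' Y' Z' i' p').

Definition inflation (C : AddCat) (E : ConflClass C) (X Y : C) (i : Mor X Y) : Prop :=
  exists (Z : C) (p : Mor Y Z), E X Y Z i p.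

Definition deflation (C : AddCat) (E : ConflClass C) (Y Z : C) (p : Mor Y Z) : Prop :=
  exists (X : C) (i : Mor X Y), E X Y Z i p.

Definition is_deflation_exact (C : AddCat) (E : ConflClass C) : Prop :=
  [/\ is_conflation_category E,
      deflation E (idm (@zobj C)),
      (forall (X Y Z : C) (p : Mor X Y) (q : Mor Y Z),
                  deflation E p -> deflation E q -> deflation E (mcomp q p)) &
      (forall (A B D : C) (p : Mor B D) (f : Mor A D), deflation E p ->
                  exists (P : C) (f' : Mor P B) (p' : Mor P A),
                    is_pullback p f f' p' /\ deflation E p')].

Definition axiom_A3 (C : AddCat) (E : ConflClass C) (AA : C -> Prop) : Prop :=
  forall (E0 D A : C) (a : Mor E0 D) (b : Mor E0 A),
    inflation E a -> deflation E b -> AA A ->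
    exists (P : C) (a' : Mor D P) (b' : Mor A P),
      is_pushout a b a' b' /\ deflation E a' /\ inflation E b'.

(* Main.v *)
Require Import Defs.
From mathcomp Require Import all_boot all_algebra.
Set Implicit Arguments.
Unset Strict Implicit.
Unset Printing Implicit Defensive.
Import GRing.Theory.
Local Open Scope ring_scope.

Section Aux.
Variable C : AddCat.

Lemma comp0l (X Y Z : C) (f : Mor X Y) : mcomp (0 : Mor Y Z) f = 0.
Proof.
have e := comp_addl (0 : Mor Y Z) 0 f; rewrite addr0 in e.
by apply: (addrI (mcomp (0 : Mor Y Z) f)); rewrite addr0 -e.
Qed.

Lemma comp0r (X Y Z : C) (g : Mor Y Z) : mcomp g (0 : Mor X Y) = 0.
Proof.
have e := comp_addr g (0 : Mor X Y) 0; rewrite addr0 in e.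
by apply: (addrI (mcomp g (0 : Mor X Y))); rewrite addr0 -e.
Qed.

Lemma kernel_mono (K Y Z W : C) (k : Mor K Y) (g : Mor Y Z) (x y : Mor W K) :
  is_kernel k g -> mcomp k x = mcomp k y -> x = y.
Proof.
move=> [gk H] e.
have [u [_ uu]] := H W (mcomp k x) (ltac:(by rewrite comp_assoc gk comp0l)).
by rewrite (uu x erefl) (uu y (esym e)).
Qed.

Lemma cokernel_epi (Y Z Q W : C) (c : Mor Z Q) (f : Mor Y Z) (x y : Mor Q W) :
  is_cokernel c f -> mcomp x c = mcomp y c -> x = y.
Proof.
move=> [cf H] e.
have [u [_ uu]] := H W (mcomp x c) (ltac:(by rewrite -comp_assoc cf comp0r)).
by rewrite (uu x erefl) (uu y (esym e)).
Qed.

Variable E : ConflClass C.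
Arguments E : clear implicits.
Hypothesis hE : is_conflation_category E.

Lemma E_kernel (X X' Y Z : C) (i : Mor X Y) (i' : Mor X' Y) (p : Mor Y Z) :
  E X Y Z i p -> is_kernel i' p -> E X' Y Z i' p.
Proof.
move=> e ki'.
have [ki _] := hE.1 _ _ _ _ _ e.
have [pi Hi] := ki. have [pi' Hi'] := ki'.
have [a [ia _]] := Hi X' i' pi'.
have [a2 [ia2 _]] := Hi' X i pi.
apply: (hE.2 _ _ _ _ _ _ i p i' p a (idm Y) (idm Z) e).
- exists a2; split.
  + apply: (kernel_mono ki'). by rewrite comp_assoc ia2 ia comp_id_r.
  + apply: (kernel_mono ki). by rewrite comp_assoc ia ia2 comp_id_r.
- by exists (idm Y); rewrite comp_id_l.
- by exists (idm Z); rewrite comp_id_l.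
- by rewrite comp_id_l ia.
- by rewrite comp_id_l comp_id_r.
Qed.

Lemma E_cokernel (X Y Z Z' : C) (i : Mor X Y) (p : Mor Y Z) (p' : Mor Y Z') :
  E X Y Z i p -> is_cokernel p' i -> E X Y Z' i p'.
Proof.
move=> e cp'.
have [_ cp] := hE.1 _ _ _ _ _ e.
have [ip Hp] := cp. have [ip' Hp'] := cp'.
have [c [ca _]] := Hp' Z p ip.
have [c2 [ca2 _]] := Hp Z' p' ip'.
apply: (hE.2 _ _ _ _ _ _ i p i p' (idm X) (idm Y) c e).
- by exists (idm X); rewrite comp_id_l.
- by exists (idm Y); rewrite comp_id_l.
- exists c2; split.
  + apply: (cokernel_epi cp'). by rewrite -comp_assoc ca ca2 comp_id_l.
  + apply: (cokernel_epi cp). by rewrite -comp_assoc ca2 ca comp_id_l.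
- by rewrite comp_id_l comp_id_r.
- by rewrite comp_id_r.
Qed.

End Aux.

Theorem mainTheorem5 (C : AddCat) (E : ConflClass C) (AA : C -> Prop)
  (hC : is_deflation_exact E)
  (hne : exists X : C, AA X)
  (hA3 : axiom_A3 E AA)
  (Y Z : C) (g : Mor Y Z)
  (hker : exists (K : C) (k : Mor K Y), is_kernel k g /\ AA K)
  (hf : exists (X : C) (f : Mor X Y), deflation E f /\ deflation E (mcomp g f)) :
  deflation E g.
Proof.
case: hC => hE _ _ R2.
have [K [k [kk AK]]] := hker.
have [X [f [[W [i Ei]] [L [h Eh]]]]] := hf.
have [ki cf] := hE.1 _ _ _ _ _ Ei.
have [P0 [f' [p' [[pbe pbH] [V [j Ej]]]]]] := R2 _ _ _ f k (ex_intro _ W (ex_intro _ i Ei)).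
have [_ cp'] := hE.1 _ _ _ _ _ Ej.
have kf' : is_kernel f' (mcomp g f).
  split; first by rewrite -comp_assoc -pbe comp_assoc kk.1 comp0l.
  move=> T w gfw.
  have [b [kb _]] := kk.2 T (mcomp f w) (ltac:(by rewrite comp_assoc)).
  have [u [[pu fu] uu]] := pbH T b w kb.
  exists u; split => // u' fu'.
  apply: uu => //. apply: (kernel_mono kk).
  by rewrite kb comp_assoc pbe -comp_assoc fu'.
have Ef' := E_kernel hE Eh kf'.
have [_ cgf] := hE.1 _ _ _ _ _ Ef'.
have [P [a' [b' [[poe poH] [_ [Q [cQ EQ]]]]]]] :=
  hA3 _ _ _ f' p' (ex_intro _ _ (ex_intro _ _ Ef')) (ex_intro _ _ (ex_intro _ _ Ej)) AK.
have [t [[ta tb] _]] := poH Y f k (esym pbe).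
have [s [[sa sb] _]] := poH Z (mcomp g f) 0
  (ltac:(by rewrite comp0l; exact: cgf.1)).
have cs : is_cokernel s b'.
  split => // T w wb.
  have [v [va vu]] := cgf.2 T (mcomp w a') (ltac:(by rewrite -comp_assoc poe comp_assoc wb comp0l)).
  exists v; split.
    have [u [_ uu]] := poH T (mcomp w a') 0 (ltac:(by rewrite comp0l -comp_assoc poe comp_assoc wb comp0l)).
    rewrite (uu w erefl wb) (uu (mcomp v s)) //.
      by rewrite -comp_assoc sa.
    by rewrite -comp_assoc sb comp0r.
  move=> v' vs; apply: vu.
  by rewrite -sa comp_assoc vs.
have Es := E_cokernel hE EQ cs.
have [kb' _] := hE.1 _ _ _ _ _ Es.
have a'i : mcomp a' i = 0.
  have [z [bz _]] := kb'.2 W (mcomp a' i) (ltac:(by rewrite comp_assoc sa -comp_assoc ki.1 comp0r)).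
  have z0 : z = 0.
    apply: (kernel_mono kk). by rewrite comp0r -tb -comp_assoc bz comp_assoc ta ki.1.
  by rewrite -bz z0 comp0r.
have [r [rf _]] := cf.2 P a' a'i.
have trid : mcomp t r = idm Y.
  apply: (cokernel_epi cf). by rewrite -comp_assoc rf ta comp_id_l.
have rk : mcomp r k = b'.
  apply: (cokernel_epi cp'). by rewrite -comp_assoc pbe comp_assoc rf poe.
have sr : mcomp s r = g.
  apply: (cokernel_epi cf). by rewrite -comp_assoc rf sa.
exists K, k.
apply: (hE.2 _ _ _ _ _ _ b' s k g (idm K) r (idm Z) Es).
- by exists (idm K); rewrite comp_id_l.
- exists t; split => //.
  have [u [_ uu]] := poH P a' b' poe.
  rewrite (uu (idm P)) ?comp_id_l // (uu (mcomp r t)) //.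
    by rewrite -comp_assoc ta.
  by rewrite -comp_assoc tb.
- by exists (idm Z); rewrite comp_id_l.
- by rewrite rk comp_id_r.
- by rewrite comp_id_l sr.
Qed.
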